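(* Let $n\geq 4$ and let $\nu: B_n\to GL_{n+1}(\mathbb{C})$ be a non-trivial homogeneous $3$-local representation of $B_n$. Then any homogeneous $3$-local extension $\nu':SM_n\to M_{n+1}(\mathbb{C})$ of $\nu$ to $SM_n$ is equivalent to one of the representations $\nu'_j$, $1\leq j\leq 8$, given for all $1\le i\le n-1$ by $\nu'_j(\sigma_i)=\mathrm{diag}(I_{i-1},M_j,I_{n-i-1})$ and $\nu'_j(\tau_i)=\mathrm{diag}(I_{i-1},N_j,I_{n-i-1})$, where (all entries complex): (1) $M_1=\begin{pmatrix} 1&0&0\\ 0&m_{22}&m_{23}\\ 0&\frac{1-m_{22}}{m_{23}}&0\end{pmatrix}$ with $m_{22}\neq1$, $m_{23}\neq0$, and (a) $N_1=\begin{pmatrix} 1&0&0\\ 0&n_{22}&m_{23}^2n_{32}\\ 0&n_{32}&n_{22}\end{pmatrix}$ if $m_{22}=0$; (b) $N_1=\begin{pmatrix} 1&0&0\\ 0&1-m_{23}n_{32}&\frac{-m_{23}^2n_{32}}{m_{22}-1}\\ 0&n_{32}&\frac{-1+m_{22}+m_{23}n_{32}}{m_{22}-1}\end{pmatrix}$ otherwise. (2) $M_2=\begin{pmatrix} 0&m_{12}&0\\ \frac{1-m_{22}}{m_{12}}&m_{22}&0\\ 0&0&1\end{pmatrix}$ with $m_{22}\neq1$, $m_{12}\neq0$, and (a) $N_2=\begin{pmatrix} n_{11}&m_{12}^2n_{21}&0\\ n_{21}&n_{11}&0\\ 0&0&1\end{pmatrix}$ if $m_{22}=0$; (b) $N_2=\begin{pmatrix}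 \frac{m_{12}n_{21}+m_{22}-1}{m_{22}-1}&-\frac{m_{12}^2n_{21}}{m_{22}-1}&0\\ n_{21}&1-m_{12}n_{21}&0\\ 0&0&1\end{pmatrix}$ otherwise. (3) $M_3=\begin{pmatrix} 1&\frac{-m_{22}}{m_{32}}&0\\ 0&m_{22}&0\\ 0&m_{32}&1\end{pmatrix}$ with $m_{22}m_{32}\neq0$, and $N_3=\begin{pmatrix} 1&n_{12}&0\\ 0&1-m_{32}n_{12}+\frac{m_{32}n_{12}}{m_{22}}&0\\ 0&-\frac{m_{32}^2n_{12}}{m_{22}}&1\end{pmatrix}$. (4) $M_4=\begin{pmatrix} 1&0&0\\ -\frac{m_{22}}{m_{23}}&m_{22}&m_{23}\\ 0&0&1\end{pmatrix}$ with $m_{23}m_{22}\neq0$, and $N_4=\begin{pmatrix} 1&0&0\\ n_{21}&1-m_{23}n_{21}+\frac{m_{23}n_{21}}{m_{22}}&-\frac{m_{23}^2n_{21}}{m_{22}}\\ 0&0&1\end{pmatrix}$. (5) $M_5=\begin{pmatrix} 1&0&0\\ 0&0&m_{23}\\ 0&m_{32}&1-m_{23}m_{32}\end{pmatrix}$ with $m_{23}m_{32}\neq0$, and (a) $N_5=\begin{pmatrix} 1&0&0\\ 0&n_{22}&n_{23}\\ 0&\frac{n_{23}}{m_{23}^2}&n_{22}\end{pmatrix}$ if $m_{32}m_{23}=1$; (b) $N_5=\begin{pmatrix} 1&0&0\\ 0&n_{22}&m_{23}-m_{23}n_{22}\\ 0&m_{32}-m_{32}n_{22}&m_{23}m_{32}(n_{22}-1)+1\end{pmatrix}$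 otherwise. (6) $M_6=\begin{pmatrix} 1-m_{12}m_{21}&m_{12}&0\\ m_{21}&0&0\\ 0&0&1\end{pmatrix}$ with $m_{12}m_{21}\neq0$, and (a) $N_6=\begin{pmatrix} n_{11}&n_{12}&0\\ \frac{n_{12}}{m_{12}^2}&n_{11}&0\\ 0&0&1\end{pmatrix}$ if $m_{12}m_{21}=1$; (b) $N_6=\begin{pmatrix} m_{12}m_{21}(n_{22}-1)+1&m_{12}-m_{12}n_{22}&0\\ m_{21}-m_{21}n_{22}&n_{22}&0\\ 0&0&1\end{pmatrix}$ otherwise. (7) $M_7=\begin{pmatrix} 1&0&0\\ 0&0&m_{23}\\ 0&m_{32}&0\end{pmatrix}$ with $m_{23}m_{32}\neq0$, and $N_7=\begin{pmatrix} 1&0&0\\ 0&n_{22}&n_{23}\\ 0&\frac{m_{32}n_{23}}{m_{23}}&n_{22}\end{pmatrix}$. (8) $M_8=\begin{pmatrix} 0&m_{12}&0\\ m_{21}&0&0\\ 0&0&1\end{pmatrix}$ with $m_{12}m_{21}\neq0$, and $N_8=\begin{pmatrix} n_{11}&n_{12}&0\\ \frac{m_{21}n_{12}}{m_{12}}&n_{11}&0\\ 0&0&1\end{pmatrix}$. Moreover, if $\nu'(\tau_i)$ is invertible for all $1\leq i\leq n-1$, then $\nu'$ is a representation of the singular braid group $SB_n$.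
   Context: The braid group $B_n$ has generators $\sigma_1,\dots,\sigma_{n-1}$ with relations $\sigma_i\sigma_{i+1}\sigma_i=\sigma_{i+1}\sigma_i\sigma_{i+1}$ ($1\le i\le n-2$) and $\sigma_i\sigma_j=\sigma_j\sigma_i$ ($|i-j|\ge2$). The singular braid monoid $SM_n$ is the monoid generated by $\sigma_1^{\pm1},\dots,\sigma_{n-1}^{\pm1},\tau_1,\dots,\tau_{n-1}$ subject to $\sigma_i\sigma_i^{-1}=\sigma_i^{-1}\sigma_i=1$, the braid relations above, and $\tau_i\tau_j=\tau_j\tau_i$, $\tau_i\sigma_j=\sigma_j\tau_i$ for $|i-j|\ge 2$, $\tau_i\sigma_i=\sigma_i\tau_i$ for $1\le i\le n-1$, and $\sigma_i\sigma_{i+1}\tau_i=\tau_{i+1}\sigma_i\sigma_{i+1}$, $\sigma_{i+1}\sigma_i\tau_{i+1}=\tau_i\sigma_{i+1}\sigma_i$ for $1\le i\le n-2$. The singular braid group $SB_n$ is the group with generators $\sigma_i,\tau_i$ and the same relations (into which $SM_n$ embeds). A representation of $SM_n$ is a monoid homomorphism into $M_{n+1}(\mathbb{C})$. A representation $\nu:B_n\to GL_{n+1}(\mathbb{C})$ is homogeneous $3$-local if there is $M\in M_3(\mathbb{C})$ with $\nu(\sigma_i)=\mathrm{diag}(I_{i-1},M,I_{n-i-1})$ for all $1\le i\le n-1$; ''non-trivial'' means not sending every $\sigma_i$ to the identity. A homogeneous $3$-local extension of $\nu$ to $SM_n$ is a representation $\nu':SM_n\to M_{n+1}(\mathbb{C})$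 with $\nu'(\sigma_i)=\nu(\sigma_i)$ and $\nu'(\tau_i)=\mathrm{diag}(I_{i-1},N,I_{n-i-1})$ for all $i$, for a single $N\in M_3(\mathbb{C})$. Two representations are equivalent if they are conjugate by a fixed invertible matrix. *)

(* Defs.v *)
From mathcomp Require Import all_boot all_order all_algebra.
From mathcomp Require Import complex.
From mathcomp Require Import Rstruct.
Unset Printing Implicit Defensive.
Import Order.TTheory GRing.Theory Num.Theory.
Local Open Scope ring_scope.

Definition CC : numClosedFieldType := complex Rdefinitions.R.

(* local3 n i M = diag(I_{i-1}, M, I_{n-i-1}) in M_{n+1}(C), for 1 <= i <= n-1:
   the 3x3 block M occupies the (0-indexed) rows/columns i-1, i, i+1. *)
Definition local3 (n i : nat) (M : 'M[CC]_3) : 'M[CC]_(n.+1) :=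
  \matrix_(r, c)
    if (i.-1 <= r < i.+2)%N && (i.-1 <= c < i.+2)%N
    then M (inord (r - i.-1)) (inord (c - i.-1))
    else (r == c)%:R.

Definition far (i j : nat) : bool := (i.+2 <= j)%N || (j.+2 <= i)%N.

Definition braid_rep (n : nat) (S : nat -> 'M[CC]_(n.+1)) : Prop :=
  [/\ forall i, (1 <= i <= n.-1)%N -> S i \in unitmx,
      forall i, (1 <= i <= n - 2)%N ->
        S i *m S i.+1 *m S i = S i.+1 *m S i *m S i.+1 &
      forall i j, (1 <= i <= n.-1)%N -> (1 <= j <= n.-1)%N -> far i j ->
        S i *m S j = S j *m S i].

Definition singular_relations (n : nat) (S T : nat -> 'M[CC]_(n.+1)) : Prop :=
  (forall i, (1 <= i <= n - 2)%N ->
        S i *m S i.+1 *m S i = S i.+1 *m S i *m S i.+1) /\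
     (
      forall i j, (1 <= i <= n.-1)%N -> (1 <= j <= n.-1)%N -> far i j ->
        S i *m S j = S j *m S i) /\
     (      forall i j, (1 <= i <= n.-1)%N -> (1 <= j <= n.-1)%N -> far i j ->
        T i *m T j = T j *m T i) /\
     (      forall i j, (1 <= i <= n.-1)%N -> (1 <= j <= n.-1)%N -> far i j ->
        T i *m S j = S j *m T i) /\
     (      forall i, (1 <= i <= n.-1)%N -> T i *m S i = S i *m T i) /\
     (      forall i, (1 <= i <= n - 2)%N ->
        S i *m S i.+1 *m T i = T i.+1 *m S i *m S i.+1) /\
     (      forall i, (1 <= i <= n - 2)%N ->
        S i.+1 *m S i *m T i.+1 = T i *m S i.+1 *m S i).

(* A representation of the singular braid monoid SM_n into M_{n+1}(C) is a
   monoid homomorphism; it is determined by the images S i of sigma_i and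
   T i of tau_i, which must satisfy the defining relations, the image of
   sigma_i^{-1} being an inverse of S i (so S i must be invertible). *)
Definition SM_rep (n : nat) (S T : nat -> 'M[CC]_(n.+1)) : Prop :=
  (forall i, (1 <= i <= n.-1)%N -> S i \in unitmx) /\ singular_relations n S T.

Definition SB_rep (n : nat) (S T : nat -> 'M[CC]_(n.+1)) : Prop :=
  [/\ forall i, (1 <= i <= n.-1)%N -> S i \in unitmx,
      forall i, (1 <= i <= n.-1)%N -> T i \in unitmx &
      singular_relations n S T].

(* Equivalence of two homogeneous 3-local representations (given by their
   blocks) of SM_n: conjugate by a single invertible matrix P on every
   generator (hence on every element). *)
Definition equiv_local3 (n : nat) (M N M' N' : 'M[CC]_3) : Prop :=
  exists P : 'M[CC]_(n.+1), P \in unitmx /\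
    forall i, (1 <= i <= n.-1)%N ->
      P *m local3 n i M *m invmx P = local3 n i M' /\
      P *m local3 n i N *m invmx P = local3 n i N'.

Definition mx3 (rows : seq (seq CC)) : 'M[CC]_3 :=
  \matrix_(r, c) nth 0 (nth [::] rows r) c.

Definition family1 (M N : 'M[CC]_3) : Prop :=
  exists m22 m23 n22 n32 : CC, m22 != 1 /\ m23 != 0 /\
    M = mx3 [:: [:: 1; 0; 0];
                           [:: 0; m22; m23];
                           [:: 0; (1 - m22) / m23; 0]] /\
    N = if m22 == 0 then
          mx3 [:: [:: 1; 0; 0];
                             [:: 0; n22; m23 ^+ 2 * n32];
                             [:: 0; n32; n22]]
        else
          mx3 [:: [:: 1; 0; 0];
                             [:: 0; 1 - m23 * n32; - (m23 ^+ 2 * n32) / (m22 - 1)];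
                             [:: 0; n32; (-1 + m22 + m23 * n32) / (m22 - 1)]].

Definition family2 (M N : 'M[CC]_3) : Prop :=
  exists m12 m22 n11 n21 : CC, m22 != 1 /\ m12 != 0 /\
    M = mx3 [:: [:: 0; m12; 0];
                           [:: (1 - m22) / m12; m22; 0];
                           [:: 0; 0; 1]] /\
    N = if m22 == 0 then
          mx3 [:: [:: n11; m12 ^+ 2 * n21; 0];
                             [:: n21; n11; 0];
                             [:: 0; 0; 1]]
        else
          mx3 [:: [:: (m12 * n21 + m22 - 1) / (m22 - 1);
                                 - ((m12 ^+ 2 * n21) / (m22 - 1)); 0];
                             [:: n21; 1 - m12 * n21; 0];
                             [:: 0; 0; 1]].

Definition family3 (M N : 'M[CC]_3) : Prop :=
  exists m22 m32 n12 : CC, m22 * m32 != 0 /\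
    M = mx3 [:: [:: 1; - m22 / m32; 0];
                           [:: 0; m22; 0];
                           [:: 0; m32; 1]] /\
    N = mx3 [:: [:: 1; n12; 0];
                           [:: 0; 1 - m32 * n12 + (m32 * n12) / m22; 0];
                           [:: 0; - ((m32 ^+ 2 * n12) / m22); 1]].

Definition family4 (M N : 'M[CC]_3) : Prop :=
  exists m22 m23 n21 : CC, m23 * m22 != 0 /\
    M = mx3 [:: [:: 1; 0; 0];
                           [:: - (m22 / m23); m22; m23];
                           [:: 0; 0; 1]] /\
    N = mx3 [:: [:: 1; 0; 0];
                           [:: n21; 1 - m23 * n21 + (m23 * n21) / m22;
                               - ((m23 ^+ 2 * n21) / m22)];
                           [:: 0; 0; 1]].

Definition family5 (M N : 'M[CC]_3) : Prop :=
  exists m23 m32 n22 n23 : CC, m23 * m32 != 0 /\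
    M = mx3 [:: [:: 1; 0; 0];
                           [:: 0; 0; m23];
                           [:: 0; m32; 1 - m23 * m32]] /\
    N = if m32 * m23 == 1 then
          mx3 [:: [:: 1; 0; 0];
                             [:: 0; n22; n23];
                             [:: 0; n23 / m23 ^+ 2; n22]]
        else
          mx3 [:: [:: 1; 0; 0];
                             [:: 0; n22; m23 - m23 * n22];
                             [:: 0; m32 - m32 * n22;
                                 m23 * m32 * (n22 - 1) + 1]].

Definition family6 (M N : 'M[CC]_3) : Prop :=
  exists m12 m21 n11 n12 n22 : CC, m12 * m21 != 0 /\
    M = mx3 [:: [:: 1 - m12 * m21; m12; 0];
                           [:: m21; 0; 0];
                           [:: 0; 0; 1]] /\
    N = if m12 * m21 == 1 then
          mx3 [:: [:: n11; n12; 0];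
                             [:: n12 / m12 ^+ 2; n11; 0];
                             [:: 0; 0; 1]]
        else
          mx3 [:: [:: m12 * m21 * (n22 - 1) + 1; m12 - m12 * n22; 0];
                             [:: m21 - m21 * n22; n22; 0];
                             [:: 0; 0; 1]].

Definition family7 (M N : 'M[CC]_3) : Prop :=
  exists m23 m32 n22 n23 : CC, m23 * m32 != 0 /\
    M = mx3 [:: [:: 1; 0; 0];
                           [:: 0; 0; m23];
                           [:: 0; m32; 0]] /\
    N = mx3 [:: [:: 1; 0; 0];
                           [:: 0; n22; n23];
                           [:: 0; (m32 * n23) / m23; n22]].

Definition family8 (M N : 'M[CC]_3) : Prop :=
  exists m12 m21 n11 n12 : CC, m12 * m21 != 0 /\
    M = mx3 [:: [:: 0; m12; 0];
                           [:: m21; 0; 0];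
                           [:: 0; 0; 1]] /\
    N = mx3 [:: [:: n11; n12; 0];
                           [:: (m21 * n12) / m12; n11; 0];
                           [:: 0; 0; 1]].

(* Main.v *)
Require Import Defs.
From mathcomp Require Import all_boot all_order all_algebra.
From mathcomp Require Import complex.
From mathcomp Require Import Rstruct.
From mathcomp Require Import ring.
Set Implicit Arguments.
Unset Strict Implicit.
Import Order.TTheory GRing.Theory Num.Theory.
Local Open Scope ring_scope.

Definition mx5 (rows : seq (seq CC)) : 'M[CC]_5 :=
  \matrix_(r, c) nth 0 (nth [::] rows r) c.

Definition res (n : nat) (h : (5 <= n.+1)%N) (A : 'M[CC]_(n.+1)) : 'M[CC]_5 :=
  \matrix_(r, c) A (widen_ord h r) (widen_ord h c).

Definition lowblk (n : nat) (A : 'M[CC]_(n.+1)) :=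
  forall r k : 'I_(n.+1), (r < 5)%N -> (5 <= k)%N -> A r k = 0.

Lemma res_mul n h (A B : 'M[CC]_(n.+1)) : lowblk A ->
  res h (A *m B) = res h A *m res h B.
Proof.
move=> hA; apply/matrixP => r c; rewrite !mxE.
rewrite (bigID (fun k : 'I_(n.+1) => (k < 5)%N)) /=.
rewrite [X in _ + X]big1 ?addr0; last first.
  by move=> k; rewrite -leqNgt => hk; rewrite hA ?mul0r //= ltn_ord.
rewrite (big_ord_narrow h) /=.
by apply: eq_bigr => k _; rewrite !mxE.
Qed.

Lemma lowblk_mul n (A B : 'M[CC]_(n.+1)) : lowblk A -> lowblk B -> lowblk (A *m B).
Proof.
move=> hA hB r k hr hk; rewrite mxE big1 // => j _.
case: (ltnP j 5) => hj; first by rewrite hB ?mulr0.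
by rewrite hA ?mul0r.
Qed.

Lemma lowblk_local n i M : (i <= 3)%N -> lowblk (local3 n i M).
Proof.
move=> hi r k hr hk; rewrite mxE.
have -> : (i.-1 <= k < i.+2)%N = false.
  by apply/negbTE; rewrite negb_and -leqNgt; apply/orP; right; apply: leq_trans hk; rewrite ltnS.
rewrite andbF.
have -> : (r == k) = false by apply/negbTE; apply/eqP => e; move: hr hk; rewrite e => /leq_trans h /h; rewrite ltnn.
by [].
Qed.

Lemma res_local n h i M : res h (local3 n i M) = local3 4 i M.
Proof. by apply/matrixP => r c; rewrite !mxE. Qed.

Definition o0 : 'I_3 := inord 0.
Definition o1 : 'I_3 := inord 1.
Definition o2 : 'I_3 := inord 2.

Lemma L1E M : local3 4 1 M = mx5 [:: [:: M o0 o0; M o0 o1; M o0 o2; 0; 0];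
                                     [:: M o1 o0; M o1 o1; M o1 o2; 0; 0];
                                     [:: M o2 o0; M o2 o1; M o2 o2; 0; 0];
                                     [:: 0; 0; 0; 1; 0];
                                     [:: 0; 0; 0; 0; 1]].
Proof.
apply/matrixP => r c; rewrite !mxE.
case: r c => [[|[|[|[|[|r]]]]] hr] [[|[|[|[|[|c]]]]] hc] //=.
all: try reflexivity.
Qed.

Lemma L2E M : local3 4 2 M = mx5 [:: [:: 1; 0; 0; 0; 0];
                                     [:: 0; M o0 o0; M o0 o1; M o0 o2; 0];
                                     [:: 0; M o1 o0; M o1 o1; M o1 o2; 0];
                                     [:: 0; M o2 o0; M o2 o1; M o2 o2; 0];
                                     [:: 0; 0; 0; 0; 1]].
Proof.
apply/matrixP => r c; rewrite !mxE.
case: r c => [[|[|[|[|[|r]]]]] hr] [[|[|[|[|[|c]]]]] hc] //=.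
all: try reflexivity.
Qed.

Lemma L3E M : local3 4 3 M = mx5 [:: [:: 1; 0; 0; 0; 0];
                                     [:: 0; 1; 0; 0; 0];
                                     [:: 0; 0; M o0 o0; M o0 o1; M o0 o2];
                                     [:: 0; 0; M o1 o0; M o1 o1; M o1 o2];
                                     [:: 0; 0; M o2 o0; M o2 o1; M o2 o2]].
Proof.
apply/matrixP => r c; rewrite !mxE.
case: r c => [[|[|[|[|[|r]]]]] hr] [[|[|[|[|[|c]]]]] hc] //=.
all: try reflexivity.
Qed.

Lemma mx3_eta (M : 'M[CC]_3) : M = mx3 [:: [:: M o0 o0; M o0 o1; M o0 o2];
                                     [:: M o1 o0; M o1 o1; M o1 o2];
                                     [:: M o2 o0; M o2 o1; M o2 o2]].
Proof.
apply/matrixP => r c; rewrite !mxE.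
have e : forall k (hk : (k < 3)%N), Ordinal hk = inord k.
  by move=> k hk; apply/val_inj; rewrite /= inordK.
case: r c => [[|[|[|r]]] hr] [[|[|[|c]]] hc] //=; by rewrite !e.
Qed.

Definition q5 (k : nat) (h : (k < 5)%N) : 'I_5 := Ordinal h.
Lemma sum5 (F : 'I_5 -> CC) : \sum_(k < 5) F k =
  F (@q5 0 isT) + F (@q5 1 isT) + F (@q5 2 isT) + F (@q5 3 isT) + F (@q5 4 isT).
Proof.
rewrite !big_ord_recl big_ord0 addr0 !addrA.
by congr (_ + _ + _ + _ + _); congr F; apply/val_inj.
Qed.

Lemma mx5E rows r c : mx5 rows r c = nth 0 (nth [::] rows r) c.
Proof. by rewrite mxE. Qed.

Lemma mul5E (A B : 'M[CC]_5) r c : (A *m B) r c =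
  A r (@q5 0 isT) * B (@q5 0 isT) c + A r (@q5 1 isT) * B (@q5 1 isT) c +
  A r (@q5 2 isT) * B (@q5 2 isT) c + A r (@q5 3 isT) * B (@q5 3 isT) c +
  A r (@q5 4 isT) * B (@q5 4 isT) c.
Proof. by rewrite mxE sum5. Qed.

Definition ent (rows : seq (seq CC)) (r c : 'I_5) : CC := nth 0 (nth [::] rows r) c.
Definition mulf (f g : 'I_5 -> 'I_5 -> CC) (r c : 'I_5) : CC :=
  f r (@q5 0 isT) * g (@q5 0 isT) c + f r (@q5 1 isT) * g (@q5 1 isT) c +
  f r (@q5 2 isT) * g (@q5 2 isT) c + f r (@q5 3 isT) * g (@q5 3 isT) c +
  f r (@q5 4 isT) * g (@q5 4 isT) c.

Lemma triple5 R1 R2 R3 R4 R5 R6 :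
  mx5 R1 *m mx5 R2 *m mx5 R3 = mx5 R4 *m mx5 R5 *m mx5 R6 ->
  forall r c, mulf (mulf (ent R1) (ent R2)) (ent R3) r c =
              mulf (mulf (ent R4) (ent R5)) (ent R6) r c.
Proof. by move=> H r c; have := congr1 (fun A : 'M[CC]_5 => A r c) H; rewrite !mul5E !mx5E. Qed.

Lemma double5 R1 R2 R3 R4 :
  mx5 R1 *m mx5 R2 = mx5 R3 *m mx5 R4 ->
  forall r c, mulf (ent R1) (ent R2) r c = mulf (ent R3) (ent R4) r c.
Proof. by move=> H r c; have := congr1 (fun A : 'M[CC]_5 => A r c) H; rewrite !mul5E !mx5E. Qed.




Definition R1 (a b c d e f g h k : CC) : seq (seq CC) :=
  [:: [:: a; b; c; 0; 0]; [:: d; e; f; 0; 0]; [:: g; h; k; 0; 0]; [:: 0; 0; 0; 1; 0]; [:: 0; 0; 0; 0; 1]].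
Definition R2 (a b c d e f g h k : CC) : seq (seq CC) :=
  [:: [:: 1; 0; 0; 0; 0]; [:: 0; a; b; c; 0]; [:: 0; d; e; f; 0]; [:: 0; g; h; k; 0]; [:: 0; 0; 0; 0; 1]].
Definition R3 (a b c d e f g h k : CC) : seq (seq CC) :=
  [:: [:: 1; 0; 0; 0; 0]; [:: 0; 1; 0; 0; 0]; [:: 0; 0; a; b; c]; [:: 0; 0; d; e; f]; [:: 0; 0; g; h; k]].

Ltac entry H r c :=
  let E := fresh "E" in
  have E := H (@q5 r isT) (@q5 c isT);
  rewrite /mulf /ent /R1 /R2 /R3 /= in E; do 2 rewrite ?mulr0 ?mul0r ?mulr1 ?mul1r ?addr0 ?add0r in E.

Tactic Notation "entryn" ident(E) constr(H) constr(r) constr(c) :=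
  have E := H (@q5 r isT) (@q5 c isT);
  rewrite /mulf /ent /R1 /R2 /R3 /= in E; do 2 rewrite ?mulr0 ?mul0r ?mulr1 ?mul1r ?addr0 ?add0r in E.

Definition eqf (f g : 'I_5 -> 'I_5 -> CC) := forall r c, f r c = g r c.
Definition M3 := fun (f : 'I_5 -> 'I_5 -> CC) => f.

Lemma sq0 (x : CC) : x * x = 0 -> x = 0.
Proof. by move/eqP; rewrite mulf_eq0 orbb => /eqP. Qed.

Lemma lcE (al l r z1 z2 : CC) : l = r -> z1 - z2 = al * (l - r) -> z1 = z2.
Proof. by move=> -> /eqP; rewrite subrr mulr0 subr_eq0 => /eqP. Qed.

Lemma lcE2 (al be l1 r1 l2 r2 z1 z2 : CC) : l1 = r1 -> l2 = r2 ->
  z1 - z2 = al * (l1 - r1) + be * (l2 - r2) -> z1 = z2.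
Proof. by move=> -> -> /eqP; rewrite !subrr !mulr0 addr0 subr_eq0 => /eqP. Qed.

Ltac fld := field; repeat (apply/andP; split); try done.

Ltac lc H al := first [ by apply: (@lcE al _ _ _ _ H); fld | by apply: (@lcE (- al) _ _ _ _ H); fld ].

Lemma ne1 (y : CC) : y != 0 -> 1 - y != 1.
Proof. by move=> hy; apply/eqP => h; move/eqP: hy; apply; rewrite -[y]opprK -[-y](addKr 1) h addNr oppr0. Qed.

Ltac zr I := exfalso; move: I; rewrite ?mul0r ?mulr0 ?add0r ?addr0 => /eqP; rewrite eq_sym oner_eq0.

Definition famall (M N : 'M[CC]_3) : Prop :=
  family1 M N \/ family2 M N \/ family3 M N \/ family4 M N \/
  family5 M N \/ family6 M N \/ family7 M N \/ family8 M N.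

Lemma mx3_congr (a1 a2 a3 a4 a5 a6 a7 a8 a9 b1 b2 b3 b4 b5 b6 b7 b8 b9 : CC) :
  a1 = b1 -> a2 = b2 -> a3 = b3 -> a4 = b4 -> a5 = b5 -> a6 = b6 -> a7 = b7 -> a8 = b8 -> a9 = b9 ->
  mx3 [:: [:: a1; a2; a3]; [:: a4; a5; a6]; [:: a7; a8; a9]] =
  mx3 [:: [:: b1; b2; b3]; [:: b4; b5; b6]; [:: b7; b8; b9]].
Proof. by move=> -> -> -> -> -> -> -> -> ->. Qed.

Lemma core (a b c d e f g h k p q r s t u v w x : CC) (Y : 'I_5 -> 'I_5 -> CC) :
  ~ (a = 1 /\ b = 0 /\ c = 0 /\ d = 0 /\ e = 1 /\ f = 0 /\ g = 0 /\ h = 0 /\ k = 1) ->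
  eqf (mulf (mulf (ent (R1 a b c d e f g h k)) (ent (R2 a b c d e f g h k))) (ent (R1 a b c d e f g h k))) (mulf (mulf (ent (R2 a b c d e f g h k)) (ent (R1 a b c d e f g h k))) (ent (R2 a b c d e f g h k))) ->
  eqf (mulf (ent (R1 a b c d e f g h k)) (ent (R3 a b c d e f g h k))) (mulf (ent (R3 a b c d e f g h k)) (ent (R1 a b c d e f g h k))) ->
  eqf (mulf (ent (R1 p q r s t u v w x)) (ent (R3 a b c d e f g h k))) (mulf (ent (R3 a b c d e f g h k)) (ent (R1 p q r s t u v w x))) ->
  eqf (mulf (ent (R3 p q r s t u v w x)) (ent (R1 a b c d e f g h k))) (mulf (ent (R1 a b c d e f g h k)) (ent (R3 p q r s t u v w x))) ->
  eqf (mulf (ent (R1 p q r s t u v w x)) (ent (R1 a b c d e f g h k))) (mulf (ent (R1 a b c d e f g h k)) (ent (R1 p q r s t u v w x))) ->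
  eqf (mulf (mulf (ent (R1 a b c d e f g h k)) (ent (R2 a b c d e f g h k))) (ent (R1 p q r s t u v w x))) (mulf (mulf (ent (R2 p q r s t u v w x)) (ent (R1 a b c d e f g h k))) (ent (R2 a b c d e f g h k))) ->
  eqf (mulf (mulf (ent (R2 a b c d e f g h k)) (ent (R1 a b c d e f g h k))) (ent (R2 p q r s t u v w x))) (mulf (mulf (ent (R1 p q r s t u v w x)) (ent (R2 a b c d e f g h k))) (ent (R1 a b c d e f g h k))) ->
  eqf (mulf (ent (R1 a b c d e f g h k)) Y) (fun r c => (r == c)%:R) -> eqf (mulf Y (ent (R1 a b c d e f g h k))) (fun r c => (r == c)%:R) ->
  famall (mx3 [:: [:: a; b; c]; [:: d; e; f]; [:: g; h; k]]) (mx3 [:: [:: p; q; r]; [:: s; t; u]; [:: v; w; x]]).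
Proof.
move=> nt HB HF HTS1 HTS3 HC H4 H5 HI1 HI2.
entryn F04 HF 0%N 4%N. entryn F40 HF 4%N 0%N.
have c0 : c = 0 := sq0 F04. have g0 : g = 0 := sq0 (esym F40). subst c g.
entryn F12 HF 1%N 2%N. entryn F13 HF 1%N 3%N. entryn F23 HF 2%N 3%N.
entryn F21 HF 2%N 1%N. entryn F31 HF 3%N 1%N. entryn F32 HF 3%N 2%N.
entryn I00 HI1 0%N 0%N. entryn I11 HI1 1%N 1%N. entryn I22 HI1 2%N 2%N.
entryn J00 HI2 0%N 0%N. entryn J11 HI2 1%N 1%N. entryn J22 HI2 2%N 2%N.
entryn B00 HB 0%N 0%N. entryn B01 HB 0%N 1%N. entryn B10 HB 1%N 0%N.
entryn B11 HB 1%N 1%N. entryn B12 HB 1%N 2%N. entryn B21 HB 2%N 1%N.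
entryn B22 HB 2%N 2%N. entryn B33 HB 3%N 3%N.
entryn S03 HTS1 0%N 3%N. entryn S13 HTS1 1%N 3%N. entryn S23 HTS1 2%N 3%N.
entryn S30 HTS1 3%N 0%N. entryn S31 HTS1 3%N 1%N. entryn S32 HTS1 3%N 2%N.
entryn T12 HTS3 1%N 2%N. entryn T13 HTS3 1%N 3%N. entryn T14 HTS3 1%N 4%N.
entryn T21 HTS3 2%N 1%N. entryn T31 HTS3 3%N 1%N. entryn T41 HTS3 4%N 1%N.
entryn C01 HC 0%N 1%N. entryn C11 HC 1%N 1%N. entryn C12 HC 1%N 2%N. entryn C21 HC 2%N 1%N.
entryn P01 H4 0%N 1%N. entryn P11 H4 1%N 1%N. entryn P12 H4 1%N 2%N.
entryn Q11 H5 1%N 1%N. entryn Q33 H5 3%N 3%N.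
clear HB HF HTS1 HTS3 HC H4 H5 HI1 HI2.
have [b0|bn0] := eqVneq b 0; last first.
  have f0 : f = 0 by apply: (@lcE b^-1 _ _ _ _ F13); fld.
  have k1 : k = 1 by apply: (@lcE b^-1 _ _ _ _ F23); fld.
  subst f k.
  have r0 : r = 0 by apply: (@lcE b^-1 _ _ _ _ S03); fld.
  have u0 : u = 0 by apply: (@lcE b^-1 _ _ _ _ S13); fld.
  have x1 : x = 1 by apply: (@lcE b^-1 _ _ _ _ S23); fld.
  subst r u x.
  have [h0|hn0] := eqVneq h 0; last first.
    have a1 : a = 1 by apply: (@lcE (- h^-1) _ _ _ _ F21); fld.
    have d0 : d = 0 by apply: (@lcE (- h^-1) _ _ _ _ F31); fld.
    subst a d.
    have ee : e = -(b * h) by apply: (@lcE b^-1 _ _ _ _ B01); fld.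
    subst e.
    have p1 : p = 1 by apply: (@lcE h^-1 _ _ _ _ T21); fld.
    have s0 : s = 0 by apply: (@lcE h^-1 _ _ _ _ T31); fld.
    have v0 : v = 0 by apply: (@lcE h^-1 _ _ _ _ T41); fld.
    subst p s v.
    have ew : w = h * q / b by apply: (@lcE2 b^-1 (-1) _ _ _ _ _ _ P11 C21); fld.
    subst w.
    have et : t = 1 - h * q - q / b by apply: (@lcE (- (b * h)^-1) _ _ _ _ P11); fld.
    subst t.
    right; right; left.
    exists (-(b * h)), h, q; split; first by rewrite mulf_neq0 // oppr_eq0 mulf_neq0.
    split; apply: mx3_congr => //; fld.
  subst h.
  have [a0|an0] := eqVneq a 0.
    subst a.
    have [d0|dn0] := eqVneq d 0.
      by subst d; zr J00.
    have v0 : v = 0 by lc S30 d^-1.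
    have w0 : w = 0 by lc S31 d^-1.
    subst v w.
    have [e0|en0] := eqVneq e 0.
      subst e.
      have es : s = d * q / b by lc C11 b^-1.
      have et : t = p by lc C01 b^-1.
      subst s t.
      do 7 right. exists b, d, p, q; split; first by rewrite mulf_neq0.
      by split; apply: mx3_congr => //; fld.
    have ee : e = 1 - b * d by lc B22 e^-1.
    subst e.
    have eq : q = b * s / d by lc C11 d^-1.
    subst q.
    have ep : p = 1 - s / d by lc P12 ((1 - b * d) * b)^-1.
    subst p.
    have et : t = 1 - b * s by lc C01 b^-1.
    subst t.
    right; left. exists b, (1 - b * d), 0, s.
    split; first by apply: ne1; rewrite mulf_neq0.
    split; first by [].
    rewrite (negbTE en0).
    have h1 : 1 - b * d - 1 != 0 by rewrite addrAC subrr add0r oppr_eq0 mulf_neq0.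
    by split; apply: mx3_congr => //; fld.
  have ee : e = 0 by lc B01 (a * b)^-1.
  subst e.
  have ea : a = 1 - b * d by lc B00 a^-1.
  subst a.
  have [d0|dn0] := eqVneq d 0.
    by subst d; zr I11.
  have v0 : v = 0 by lc S30 d^-1.
  have w0 : w = 0 by lc S31 d^-1.
  subst v w.
  have eq : q = b - b * t by lc P01 (1 - b * d)^-1.
  subst q.
  have es : s = d - d * t by lc C11 b^-1.
  have ep : p = b * d * (t - 1) + 1 by lc C01 b^-1.
  subst s p.
  do 5 right; left. exists b, d, 0, 0, t.
  split; first by rewrite mulf_neq0.
  have bd1 : (b * d == 1) = false by apply/negbTE; move: an0; rewrite subr_eq0 eq_sym.
  rewrite bd1.
  by split; apply: mx3_congr => //; fld.
subst b.
have [f0|fn0] := eqVneq f 0; last first.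
  have a1 : a = 1 by lc F12 f^-1.
  subst a.
  have p1 : p = 1 by lc T12 f^-1.
  have q0 : q = 0 by lc T13 f^-1.
  have r0 : r = 0 by lc T14 f^-1.
  subst p q r.
  have [d0|dn0] := eqVneq d 0; last first.
    have h0 : h = 0 by lc F31 d^-1.
    have k1 : k = 1 by lc F32 d^-1.
    subst h k.
    have ee : e = -(d * f) by lc B10 d^-1.
    subst e.
    have v0 : v = 0 by lc S30 d^-1.
    have w0 : w = 0 by lc S31 d^-1.
    have x1 : x = 1 by lc S32 d^-1.
    subst v w x.
    have eu : u = f * s / d.
      first [ by apply: (@lcE2 1 (- d^-1) _ _ _ _ _ _ C12 Q11); fld
            | by apply: (@lcE2 (-1) d^-1 _ _ _ _ _ _ C12 Q11); fld ].
    subst u.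
    have et : t = 1 - f * s - s / d by lc Q11 (d * f)^-1.
    subst t.
    do 3 right; left. exists (-(d * f)), f, s.
    split; first by rewrite mulf_neq0 // oppr_eq0 mulf_neq0.
    by split; apply: mx3_congr => //; fld.
  subst d.
  have [e0|en0] := eqVneq e 0.
    subst e.
    have [k0|kn0] := eqVneq k 0.
      subst k.
      have [h0|hn0] := eqVneq h 0.
        by subst h; zr I22.
      have s0 : s = 0 by lc T31 h^-1.
      have v0 : v = 0 by lc T41 h^-1.
      subst s v.
      have ew : w = h * u / f by lc C11 f^-1.
      have ex : x = t by lc C12 f^-1.
      subst w x.
      do 6 right; left. exists f, h, t, u.
      split; first by rewrite mulf_neq0.
      by split; apply: mx3_congr => //; fld.
    have ek : k = 1 - f * h by lc B33 k^-1.
    subst k.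
    have [h0|hn0] := eqVneq h 0.
      by subst h; zr J11.
    have s0 : s = 0 by lc T31 h^-1.
    have v0 : v = 0 by lc T41 h^-1.
    subst s v.
    have ex : x = 1 - h * u by lc Q33 (1 - f * h)^-1.
    subst x.
    have eu : u = f - f * t by lc C12 (1:CC).
    subst u.
    have ew : w = h - h * t by lc C11 f^-1.
    subst w.
    do 4 right; left. exists f, h, t, 0.
    split; first by rewrite mulf_neq0.
    have hf1 : (h * f == 1) = false by apply/negbTE; move: kn0; rewrite subr_eq0 eq_sym mulrC.
    rewrite hf1.
    by split; apply: mx3_congr => //; fld.
  have k0 : k = 0 by lc B12 (e * f)^-1.
  subst k.
  have ee : e = 1 - f * h by lc B11 e^-1.
  subst e.
  have [h0|hn0] := eqVneq h 0.
    by subst h; zr I22.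
  have s0 : s = 0 by lc T31 h^-1.
  have v0 : v = 0 by lc T41 h^-1.
  subst s v.
  have eu : u = f * w / h by lc C11 h^-1.
  subst u.
  have ex : x = 1 - w / h by lc P12 ((1 - f * h) * f)^-1.
  subst x.
  have et : t = 1 - f * w by lc C12 f^-1.
  subst t.
  left. exists (1 - f * h), f, 0, w.
  split; first by apply: ne1; rewrite mulf_neq0.
  split; first by [].
  rewrite (negbTE en0).
  have h1 : 1 - f * h - 1 != 0 by rewrite addrAC subrr add0r oppr_eq0 mulf_neq0.
  by split; apply: mx3_congr => //; fld.
subst f.
have [d0|dn0] := eqVneq d 0; last first.
  have h0 : h = 0 by lc F31 d^-1.
  have k1 : k = 1 by lc F32 d^-1.
  subst h k.
  have [a0|an0] := eqVneq a 0.
    by subst a; zr I00.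
  have [e0|en0] := eqVneq e 0.
    by subst e; zr J11.
  have X : a * e * d = 0 by lc B10 (1:CC).
  by move/eqP: X; rewrite !mulf_eq0 (negbTE an0) (negbTE en0) (negbTE dn0).
subst d.
have [h0|hn0] := eqVneq h 0; last first.
  have a1 : a = 1 by lc F21 h^-1.
  subst a.
  have [e0|en0] := eqVneq e 0.
    by subst e; zr I11.
  have [k0|kn0] := eqVneq k 0.
    by subst k; zr J22.
  have X : k * e * h = 0 by lc B21 (1:CC).
  by move/eqP: X; rewrite !mulf_eq0 (negbTE kn0) (negbTE en0) (negbTE hn0).
subst h.
have [a0|an0] := eqVneq a 0.
  by subst a; zr I00.
have [e0|en0] := eqVneq e 0.
  by subst e; zr I11.
have [k0|kn0] := eqVneq k 0.
  by subst k; zr I22.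
have a1 : a = 1 by lc B00 a^-1.
subst a.
have e1 : e = 1 by lc B11 e^-1.
have k1 : k = 1 by lc B33 k^-1.
subst e k.
by exfalso; apply: nt; do ! split.
Qed.

Lemma res1 n (h : (5 <= n.+1)%N) : res h 1%:M = 1%:M.
Proof. by apply/matrixP => r c; rewrite !mxE -val_eqE /= val_eqE. Qed.

Lemma res3 n (h : (5 <= n.+1)%N) (A B C : 'M[CC]_(n.+1)) : lowblk A -> lowblk B ->
  res h (A *m B *m C) = res h A *m res h B *m res h C.
Proof. by move=> hA hB; rewrite res_mul; [rewrite res_mul | apply: lowblk_mul]. Qed.

Lemma resL1 n h M : @res n h (local3 n 1 M) =
  mx5 (R1 (M o0 o0) (M o0 o1) (M o0 o2) (M o1 o0) (M o1 o1) (M o1 o2) (M o2 o0) (M o2 o1) (M o2 o2)).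
Proof. by rewrite res_local L1E. Qed.
Lemma resL2 n h M : @res n h (local3 n 2 M) =
  mx5 (R2 (M o0 o0) (M o0 o1) (M o0 o2) (M o1 o0) (M o1 o1) (M o1 o2) (M o2 o0) (M o2 o1) (M o2 o2)).
Proof. by rewrite res_local L2E. Qed.
Lemma resL3 n h M : @res n h (local3 n 3 M) =
  mx5 (R3 (M o0 o0) (M o0 o1) (M o0 o2) (M o1 o0) (M o1 o1) (M o1 o2) (M o2 o0) (M o2 o1) (M o2 o2)).
Proof. by rewrite res_local L3E. Qed.

Lemma tri_n n (h : (5 <= n.+1)%N) (A B C D E F : 'M[CC]_(n.+1)) RA RB RC RD RE RF :
  lowblk A -> lowblk B -> lowblk D -> lowblk E ->
  res h A = mx5 RA -> res h B = mx5 RB -> res h C = mx5 RC ->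
  res h D = mx5 RD -> res h E = mx5 RE -> res h F = mx5 RF ->
  A *m B *m C = D *m E *m F ->
  eqf (mulf (mulf (ent RA) (ent RB)) (ent RC)) (mulf (mulf (ent RD) (ent RE)) (ent RF)).
Proof.
move=> lA lB lD lE eA eB eC eD eE eF H; apply: triple5.
by rewrite -eA -eB -eC -eD -eE -eF -!res3 // H.
Qed.

Lemma dbl_n n (h : (5 <= n.+1)%N) (A B D E : 'M[CC]_(n.+1)) RA RB RD RE :
  lowblk A -> lowblk D ->
  res h A = mx5 RA -> res h B = mx5 RB -> res h D = mx5 RD -> res h E = mx5 RE ->
  A *m B = D *m E ->
  eqf (mulf (ent RA) (ent RB)) (mulf (ent RD) (ent RE)).
Proof.
move=> lA lD eA eB eD eE H; apply: double5.
by rewrite -eA -eB -eD -eE -!res_mul // H.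
Qed.

Lemma inv5l R (Y : 'M[CC]_5) : mx5 R *m Y = 1%:M ->
  eqf (mulf (ent R) (fun i j => Y i j)) (fun r c => (r == c)%:R).
Proof. by move=> H r c; have := congr1 (fun A : 'M[CC]_5 => A r c) H; rewrite mul5E !mx5E mxE. Qed.

Lemma inv5r R (Y : 'M[CC]_5) : Y *m mx5 R = 1%:M ->
  eqf (mulf (fun i j => Y i j) (ent R)) (fun r c => (r == c)%:R).
Proof. by move=> H r c; have := congr1 (fun A : 'M[CC]_5 => A r c) H; rewrite mul5E !mx5E mxE. Qed.

Lemma mx3_one : mx3 [:: [:: 1; 0; 0]; [:: 0; 1; 0]; [:: 0; 0; 1]] = 1%:M.
Proof.
apply/matrixP => r c; rewrite !mxE.
by case: r c => [[|[|[|r]]] hr] [[|[|[|c]]] hc].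
Qed.

Lemma local3_one n i : local3 n i 1%:M = 1%:M.
Proof.
apply/matrixP => r c; rewrite !mxE.
case: ifP => // /andP[/andP[hr1 hr2] /andP[hc1 hc2]].
have hi : (i.+2 <= i.-1 + 3)%N by case: (i) => // k; rewrite addn3.
have hr : (r - i.-1 < 3)%N by rewrite ltn_subLR // (leq_trans hr2 hi).
have hc : (c - i.-1 < 3)%N by rewrite ltn_subLR // (leq_trans hc2 hi).
by rewrite -val_eqE /= !inordK // eqn_sub2rE.
Qed.

Unset Implicit Arguments.
Set Strict Implicit.

Theorem theorem4p2 (n : nat) (M N : 'M[CC]_3) :
  (4 <= n)%N ->
  braid_rep n (fun i => local3 n i M) ->
  (exists i, (1 <= i <= n.-1)%N /\ local3 n i M != 1%:M) ->
  SM_rep n (fun i => local3 n i M) (fun i => local3 n i N) ->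
  (exists M' N' : 'M[CC]_3,
      (family1 M' N' \/ family2 M' N' \/ family3 M' N' \/ family4 M' N' \/
       family5 M' N' \/ family6 M' N' \/ family7 M' N' \/ family8 M' N')
      /\ equiv_local3 n M N M' N')
  /\ ((forall i, (1 <= i <= n.-1)%N -> local3 n i N \in unitmx) ->
      SB_rep n (fun i => local3 n i M) (fun i => local3 n i N)).
Proof.
move=> hn _ [i0 [hi0 hneq]] [Sunit Srel].
split; last first.
  by move=> hT; split.
case: (Srel) => [Hbr [Hfar [HTT [HTS [HTSi [H4 H5]]]]]].
have h5 : (5 <= n.+1)%N by rewrite ltnS.
have l1 : forall X, lowblk (local3 n 1 X) by move=> X; apply: lowblk_local.
have l2 : forall X, lowblk (local3 n 2 X) by move=> X; apply: lowblk_local.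
have l3 : forall X, lowblk (local3 n 3 X) by move=> X; apply: lowblk_local.
have i1 : (1 <= 1 <= n.-1)%N by rewrite /= -subn1 ltn_subRL; apply: leq_trans hn.
have i3 : (1 <= 3 <= n.-1)%N by rewrite /= -subn1 leq_subRL //; apply: leq_trans hn.
have ib : (1 <= 1 <= n - 2)%N by rewrite /= ltn_subRL; apply: leq_trans hn.
have f13 : far 1 3 by [].
have f31 : far 3 1 by [].
have HB := tri_n (l1 M) (l2 M) (l2 M) (l1 M) (resL1 h5 M) (resL2 h5 M) (resL1 h5 M)
   (resL2 h5 M) (resL1 h5 M) (resL2 h5 M) (Hbr 1%N ib).
have HF := dbl_n (l1 M) (l3 M) (resL1 h5 M) (resL3 h5 M) (resL3 h5 M) (resL1 h5 M) (Hfar 1%N 3%N i1 i3 f13).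
have HTS1 := dbl_n (l1 N) (l3 M) (resL1 h5 N) (resL3 h5 M) (resL3 h5 M) (resL1 h5 N) (HTS 1%N 3%N i1 i3 f13).
have HTS3 := dbl_n (l3 N) (l1 M) (resL3 h5 N) (resL1 h5 M) (resL1 h5 M) (resL3 h5 N) (HTS 3%N 1%N i3 i1 f31).
have HC := dbl_n (l1 N) (l1 M) (resL1 h5 N) (resL1 h5 M) (resL1 h5 M) (resL1 h5 N) (HTSi 1%N i1).
have HH4 := tri_n (l1 M) (l2 M) (l2 N) (l1 M) (resL1 h5 M) (resL2 h5 M) (resL1 h5 N)
   (resL2 h5 N) (resL1 h5 M) (resL2 h5 M) (H4 1%N ib).
have HH5 := tri_n (l2 M) (l1 M) (l1 N) (l2 M) (resL2 h5 M) (resL1 h5 M) (resL2 h5 N)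
   (resL1 h5 N) (resL2 h5 M) (resL1 h5 M) (H5 1%N ib).
have U1 := mulmxV (Sunit 1%N i1).
have U2 : mx5 (R1 (M o0 o0) (M o0 o1) (M o0 o2) (M o1 o0) (M o1 o1) (M o1 o2) (M o2 o0) (M o2 o1) (M o2 o2))
    *m res h5 (invmx (local3 n 1 M)) = 1%:M.
  by rewrite -(resL1 h5) -res_mul // U1 res1.
have HI1 := inv5l U2.
have HI2 := inv5r (mulmx1C U2).
have nt : ~ (M o0 o0 = 1 /\ M o0 o1 = 0 /\ M o0 o2 = 0 /\ M o1 o0 = 0 /\ M o1 o1 = 1 /\
             M o1 o2 = 0 /\ M o2 o0 = 0 /\ M o2 o1 = 0 /\ M o2 o2 = 1).
  move=> [e1 [e2 [e3 [e4 [e5 [e6 [e7 [e8 e9]]]]]]]].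
  move: hneq; rewrite (mx3_eta M) e1 e2 e3 e4 e5 e6 e7 e8 e9 mx3_one local3_one.
  by rewrite eqxx.
have := core nt HB HF HTS1 HTS3 HC HH4 HH5 HI1 HI2.
rewrite -(mx3_eta M) -(mx3_eta N) => hfam.
exists M, N; split; first exact: hfam.
exists 1%:M; split; first exact: unitmx1.
by move=> i _; rewrite invmx1 !mul1mx !mulmx1.
Qed.
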